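(* Let $G$ be a finite group of $F$-class $1$ and $F$-rank $\ell$, and let $H$ be the largest solvable normal subgroup of $G$. Then: (a) $F(G)$ is a direct product of elementary abelian groups and $|F(G)| = \ell$; (b) $H$ is solvable of $F$-class $1$ and $F$-rank $\ell$, and $F(G) = F(H)$; (c) $C_H(F(H)) = F(H)$.
   Context: For a finite group $G$, $F(G)$ denotes its Fitting subgroup. The $F$-central series of $G$ is defined by $\nu_0(G)=F(G)$ and, for $i\ge 0$, $\nu_{i+1}(G)$ is the smallest normal subgroup $N$ of $F(G)$ with $N\le \nu_i(G)$ such that $\nu_i(G)/N$ is centralized by $F(G)$ and is a direct product of elementary abelian groups. The $F$-class of $G$ is the least integer $c\ge 0$ with $\nu_c(G)=\{1\}$; if the $F$-class is at least $1$, the $F$-rank of $G$ is $|\nu_0(G)/\nu_1(G)|$. *)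

(* Defs.v *)
From mathcomp Require Import all_boot all_fingroup all_solvable.
Set Implicit Arguments. Unset Strict Implicit. Unset Printing Implicit Defensive.
Import GroupScope.

Section FCentral.
Variable gT : finGroupType.

Definition elem_prod (A : {set gT}) : bool :=
  abelian A && all (fun p => p.-abelem 'O_p(A)) (primes #|A|).

Definition elem_prod_q (N : {set gT}) (A : {set coset_of N}) : bool :=
  abelian A && all (fun p => p.-abelem 'O_p(A)) (primes #|A|).

Definition nu_ok (F M N : {group gT}) : bool :=
  [&& N <| F, N \subset M, [~: M, F] \subset N & elem_prod_q (M / N)].

(* The F-central series nu_i(G); nu_{i+1} is the smallest admissible N,
   i.e. the intersection of all admissible N. *)
Fixpoint nu (G : {group gT}) (i : nat) : {group gT} :=
  match i with
  | 0 => 'F(G)%G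
  | i'.+1 => (\bigcap_(N : {group gT} | nu_ok 'F(G)%G (nu G i') N) N)%G
  end.

Definition Fclass (G : {group gT}) (c : nat) : Prop :=
  nu G c = 1%G /\ (forall j, j < c -> nu G j != 1%G).

Definition Frank (G : {group gT}) : nat := #|nu G 0 : nu G 1|.

End FCentral.

(* Main.v *)
Require Import Defs.
From mathcomp Require Import all_boot all_fingroup all_solvable zify.
Import GroupScope.
Lemma cent_Fitting (gT : finGroupType) (H : {group gT}) : solvable H -> 'C_H('F(H)) \subset 'F(H).
Proof.
move=> solH.
have nCH : 'C_H('F(H)) <| H.
  by have := subcent_normal H 'F(H); rewrite (setIidPl (normal_norm (Fitting_normal H))).
have solC : solvable 'C_H('F(H)) := solvableS (subsetIl _ _) solH.
case/derivedP: solC => n Cn1.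
suff: forall j, ('C_H('F(H)))^`(n - j) \subset 'F(H) by move/(_ n); rewrite subnn derg0.
elim=> [|j IH]; first by rewrite subn0 Cn1 sub1G.
case: (leqP n j) => [le|lt].
  by rewrite (_ : n - j.+1 = n - j) //; lia.
move: IH; rewrite (_ : n - j = (n - j.+1).+1); last by lia.
set m := n - j.+1 => IH.
apply: Fitting_max; first exact: char_normal_trans (der_char m _) nCH.
apply: small_nil_class; apply: leq_trans (_ : 2 <= 5) => //; rewrite nil_class2.
rewrite subsetI der_sub /= centsC.
have -> : ('C_H('F(H)))^`(m)%G^`(1) = ('C_H('F(H)))^`(m.+1) by rewrite dergSn.
apply: subset_trans (der_sub m _) _; apply: subset_trans (subsetIr _ _) _.
exact: centS IH.
Qed.
Lemma key (gT : finGroupType) (G : {group gT}) : nu G 1 = 1%G -> elem_prod 'F(G).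
Proof.
move=> hnu.
have E : \bigcap_(N : {group gT} | nu_ok 'F(G)%G 'F(G)%G N) gval N = 1 :> {set gT}.
  by rewrite -[LHS]/(gval (nu G 1)) hnu.
have abF : abelian 'F(G).
  have sub : [~: 'F(G), 'F(G)] \subset \bigcap_(N : {group gT} | nu_ok 'F(G)%G 'F(G)%G N) gval N.
    by apply/bigcapsP => N /and4P [_ _ h _]; exact h.
  by apply/commG1P; move: sub; rewrite E => /trivgP.
rewrite /elem_prod abF; apply/allP => p pP.
have pr : prime p by move: pP; rewrite mem_primes => /andP[].
rewrite abelemE // (abelianS (pcore_sub _ _) abF) /=; apply/exponentP => x Ox.
suff : x ^+ p \in \bigcap_(N : {group gT} | nu_ok 'F(G)%G 'F(G)%G N) gval N by rewrite E => /set1P.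
apply/bigcapP => N /and4P [nNF _ _ epq].
have Fx : x \in 'F(G) := subsetP (pcore_sub _ _) x Ox.
have nNx : x \in 'N(N) := subsetP (normal_norm nNF) x Fx.
apply: coset_idr; first by rewrite groupX.
rewrite morphX //.
set y := coset N x.
have Fy : y \in 'F(G) / N := mem_quotient N Fx.
have py : p.-elt y := morph_p_elt (coset_morphism N) nNx (mem_p_elt (pcore_pgroup _ _) Ox).
case/andP: epq => abQ /allP allQ.
have Oy : y \in 'O_p('F(G) / N).
  by rewrite (mem_normal_Hall (nilpotent_pcore_Hall p (abelian_nil abQ)) (pcore_normal _ _) Fy).
case pQ: (p \in primes #|'F(G) / N|).
  by have := allQ p pQ; rewrite abelemE // => /andP[_ /exponentP]; apply.
have O1 : 'O_p('F(G) / N) = 1.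
  apply/eqP; rewrite trivg_card1; apply/eqP; apply: (pnat_1 (pcore_pgroup _ _)).
  apply: pnat_dvd (cardSg (pcore_sub _ _)) _.
  by rewrite p'natE //; move: pQ; rewrite mem_primes pr cardG_gt0 /= => ->.
by move: Oy; rewrite O1 => /set1P y1; rewrite [coset_morphism _ _]y1 expg1n.
Qed.

Theorem lemma3p1 (gT : finGroupType) (G H : {group gT}) (l : nat) :
  Fclass G 1 -> Frank G = l ->
  H <| G -> solvable H ->
  (forall K : {group gT}, K <| G -> solvable K -> K \subset H) ->
  (elem_prod 'F(G) /\ #|'F(G)| = l) /\
  (solvable H /\ Fclass H 1 /\ Frank H = l /\ 'F(G) = 'F(H)) /\
  'C_H('F(H)) = 'F(H).
Proof.
move=> [hnu hne] hl nHG solH maxH.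
have eF := @key gT G hnu.
have abF : abelian 'F(G) by case/andP: eF.
have FG1 : #|'F(G)| = l by rewrite -hl /Frank hnu /= indexg1.
have FsubH : 'F(G) \subset H := maxH _ (Fitting_normal G) (nilpotent_sol (Fitting_nil G)).
have eFH : 'F(G) = 'F(H).
  apply/eqP; rewrite eqEsubset; apply/andP; split.
    exact: Fitting_max (normalS FsubH (normal_sub nHG) (Fitting_normal G)) (Fitting_nil G).
  exact: Fitting_max (char_normal_trans (gFchar _ H) nHG) (Fitting_nil H).
have eFHg : 'F(H)%G = 'F(G)%G by apply: val_inj; rewrite /= eFH.
have nuHG : forall i, nu H i = nu G i.
  elim=> [|i IH]; first exact: eFHg.
  by rewrite /= eFHg IH.
split; first by [].
split; last first.
  apply/eqP; rewrite eqEsubset cent_Fitting // subsetI Fitting_sub /= -eFH; exact: abF.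
split; first by [].
split.
  split; first by rewrite nuHG.
  by move=> j; rewrite ltnS leqn0 => /eqP->; rewrite nuHG; exact: hne.
by rewrite /Frank !nuHG.
Qed.
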